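(* Let $\varepsilon\in[0,1)$ and let $T:\Delta\to\Sigma_1$ be a test that $\Delta$-controls for type I error with probability $1-\varepsilon$, i.e. $P(T(P))\le\varepsilon$ for every $P\in\Delta$. Then for every $\delta\in(0,1-\varepsilon]$ the test $T$ can be manipulated with probability $1-\varepsilon-\delta$: there is a strategy $\zeta$ (a finitely supported probability on $\Delta$) such that for every $\omega\in\Omega$, $\zeta(\{P\in\Delta:\omega\notin T(P)\})\ge 1-\varepsilon-\delta$.
   Context: Let $\Omega=\{0,1\}^{\mathbb N}$ (paths) with the product topology; for $\omega\in\Omega$, $t\ge0$, $\omega^t$ is the cylinder of paths agreeing with $\omega$ in the first $t$ coordinates. $\Sigma$ is a fixed $\sigma$-algebra on $\Omega$ containing all cylinders; $\Sigma_1$ is the family of open subsets of $\Omega$ (equivalently, countable unions of cylinders). $\mathbb P$ is the set of finitely additive probabilities on $(\Omega,\Sigma)$. $P\in\mathbb P$ is strongly nonatomic (an ''opinion'') if for every $E\in\Sigma$ and $\alpha\in[0,1]$ there is $F\in\Sigma$ with $F\subseteq E$ and $P(F)=\alpha P(E)$; $\Delta$ denotes the set of opinions. A test is a function $T:\Delta\to\Sigma_1$. A strategy is a probability measure on $\Delta$ with finite support. *)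

(* Defs.v *)
From Stdlib Require Import Reals List ClassicalEpsilon.
Open Scope R_scope.

Definition Omega := nat -> bool.
Definition event := Omega -> Prop.

Definition cylinder (w : Omega) (t : nat) : event :=
  fun w' => forall i, (i < t)%nat -> w' i = w i.

Definition subset (A B : event) : Prop := forall w, A w -> B w.

Definition is_sigma_algebra (S : event -> Prop) : Prop :=
  S (fun _ => True) /\
  (forall E, S E -> S (fun w => ~ E w)) /\
  (forall En : nat -> event, (forall n, S (En n)) -> S (fun w => exists n, En n w)).

Definition contains_cylinders (S : event -> Prop) : Prop :=
  forall w t, S (cylinder w t).

Definition is_open (A : event) : Prop :=
  forall w, A w -> exists t, subset (cylinder w t) A.

Definition setfun := event -> R.

Definition fa_prob (S : event -> Prop) (P : setfun) : Prop :=
  (forall E, S E -> 0 <= P E) /\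
  P (fun _ => True) = 1 /\
  (forall E F, S E -> S F -> (forall w, E w -> F w -> False) ->
     P (fun w => E w \/ F w) = P E + P F).

Definition strongly_nonatomic (S : event -> Prop) (P : setfun) : Prop :=
  forall E alpha, S E -> 0 <= alpha <= 1 ->
    exists F, S F /\ subset F E /\ P F = alpha * P E.

Definition opinion (S : event -> Prop) (P : setfun) : Prop :=
  fa_prob S P /\ strongly_nonatomic S P.

(** A finitely supported probability on Delta, given as a finite list of
    (opinion, weight) pairs. *)
Definition strategy (S : event -> Prop) (z : list (setfun * R)) : Prop :=
  (forall Pw, In Pw z -> opinion S (fst Pw) /\ 0 <= snd Pw) /\
  fold_right (fun Pw acc => snd Pw + acc) 0 z = 1.

Fixpoint mass (z : list (setfun * R)) (A : setfun -> Prop) : R :=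
  match z with
  | nil => 0
  | (P, w) :: z' =>
      (if excluded_middle_informative (A P) then w else 0) + mass z' A
  end.

(* Main.v *)
Require Import Defs.
From Stdlib Require Import Reals List ClassicalEpsilon Classical FunctionalExtensionality PropExtensionality Lra Lia.
From mathcomp Require classical_sets filter.
Open Scope R_scope.


Definition ufilter {I : Type} (U : (I -> Prop) -> Prop) : Prop :=
  U (fun _ => True) /\ ~ U (fun _ => False) /\
  (forall A B, U A -> U B -> U (fun i => A i /\ B i)) /\
  (forall A B : I -> Prop, (forall i, A i -> B i) -> U A -> U B) /\
  (forall A, U A \/ U (fun i => ~ A i)).

Definition islim {I : Type} (U : (I -> Prop) -> Prop) (f : I -> R) (L : R) :=
  forall e, 0 < e -> U (fun i => Rabs (f i - L) < e).

Lemma uf_nonempty {I} U (A : I -> Prop) : ufilter U -> U A -> exists i, A i.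
Proof.
  intros [UT [U0 [UI [US _]]]] HA. apply NNPP; intro H. apply U0.
  apply (US A); auto. intros i Ai; apply H; exists i; auto.
Qed.

Lemma islim_unique {I} U (f : I -> R) L1 L2 : ufilter U -> islim U f L1 -> islim U f L2 -> L1 = L2.
Proof.
  intros HU H1 H2. destruct (Req_dec L1 L2) as [|Hne]; auto. exfalso.
  assert (He : 0 < Rabs (L1 - L2) / 2).
  { assert (0 < Rabs (L1 - L2)) by (apply Rabs_pos_lt; lra). lra. }
  destruct HU as [UT [U0 [UI [US UU]]]].
  pose proof (UI _ _ (H1 _ He) (H2 _ He)) as H.
  destruct (uf_nonempty U _ (conj UT (conj U0 (conj UI (conj US UU)))) H) as [i [a b]].
  assert (Rabs (L1 - L2) <= Rabs (f i - L1) + Rabs (f i - L2)).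
  { replace (L1 - L2) with (-(f i - L1) + (f i - L2)) by ring.
    eapply Rle_trans; [apply Rabs_triang|]. rewrite Rabs_Ropp. lra. }
  lra.
Qed.

Lemma islim_exists {I} U (f : I -> R) a b : ufilter U -> (forall i, a <= f i <= b) ->
  exists L, islim U f L.
Proof.
  intros HU Hb. pose proof HU as [UT [U0 [UI [US UU]]]].
  set (E := fun r => U (fun i => r <= f i)).
  assert (Eb : bound E).
  { exists b. intros r Er. destruct (Rle_dec r b) as [|Hn]; auto. exfalso.
    apply U0. apply (US _ _ ) with (2 := Er). intros i Hi. specialize (Hb i). lra. }
  assert (Ea : exists x, E x). { exists a. apply (US _ _ ) with (2 := UT). intros i _; apply Hb. }
  destruct (completeness E Eb Ea) as [L [Lub1 Lub2]].
  exists L. intros e He.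
  assert (A1 : U (fun i => L - e < f i)).
  { apply NNPP; intro Hn.
    assert (Lub2' : is_upper_bound E (L - e)).
    { intros r Er. destruct (Rle_dec r (L - e)) as [|Hr]; auto. exfalso. apply Hn.
      apply (US _ _) with (2 := Er). intros i Hi. lra. }
    specialize (Lub2 _ Lub2'). lra. }
  assert (A2 : U (fun i => f i < L + e)).
  { destruct (UU (fun i => f i < L + e)) as [|H]; auto. exfalso.
    assert (E (L + e)). { apply (US _ _) with (2 := H). intros i Hi. lra. }
    specialize (Lub1 _ H0). lra. }
  apply (US _ _) with (2 := UI _ _ A1 A2). intros i [h1 h2]. apply Rabs_def1; lra.
Qed.

Lemma islim_plus {I} U (f g : I -> R) a b : ufilter U -> islim U f a -> islim U g b ->
  islim U (fun i => f i + g i) (a + b).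
Proof.
  intros [UT [U0 [UI [US UU]]]] Hf Hg e He.
  apply (US _ _) with (2 := UI _ _ (Hf (e/2) ltac:(lra)) (Hg (e/2) ltac:(lra))).
  intros i [h1 h2]. replace (f i + g i - (a + b)) with ((f i - a) + (g i - b)) by ring.
  eapply Rle_lt_trans; [apply Rabs_triang|]. lra.
Qed.

Lemma islim_scal {I} U (f : I -> R) a c : ufilter U -> islim U f a ->
  islim U (fun i => c * f i) (c * a).
Proof.
  intros HU Hf. destruct (Req_dec c 0) as [->|Hc].
  - intros e He. destruct HU as [UT [U0 [UI [US UU]]]]. apply (US _ _) with (2 := UT).
    intros i _. replace (0 * f i - 0 * a) with 0 by ring. rewrite Rabs_R0; lra.
  - intros e He. destruct HU as [UT [U0 [UI [US UU]]]].
    assert (Hc' : 0 < Rabs c) by (apply Rabs_pos_lt; auto).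
    apply (US _ _) with (2 := Hf (e / Rabs c) ltac:(apply Rdiv_lt_0_compat; auto)).
    intros i Hi. replace (c * f i - c * a) with (c * (f i - a)) by ring.
    rewrite Rabs_mult. apply (Rmult_lt_compat_l (Rabs c)) in Hi; auto.
    replace (Rabs c * (e / Rabs c)) with e in Hi by (field; lra). exact Hi.
Qed.

Lemma islim_ev {I} U (f g : I -> R) a : ufilter U -> U (fun i => f i = g i) -> islim U f a -> islim U g a.
Proof.
  intros [UT [U0 [UI [US UU]]]] Hfg Hf e He.
  apply (US _ _) with (2 := UI _ _ Hfg (Hf e He)). intros i [h1 h2]. rewrite <- h1; auto.
Qed.

Lemma islim_const {I} U (c : R) : ufilter U -> islim U (fun _ : I => c) c.
Proof.
  intros [UT [U0 [UI [US UU]]]] e He. apply (US _ _) with (2 := UT). intros i _.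
  replace (c - c) with 0 by ring. rewrite Rabs_R0; lra.
Qed.

Lemma islim_ge {I} U (f : I -> R) a c : ufilter U -> U (fun i => c <= f i) -> islim U f a -> c <= a.
Proof.
  intros HU Hc Hf. destruct (Rle_dec c a) as [|Hn]; auto. exfalso.
  pose proof HU as [UT [U0 [UI [US UU]]]].
  destruct (uf_nonempty U _ HU (UI _ _ Hc (Hf (c - a) ltac:(lra)))) as [i [h1 h2]].
  apply Rabs_def2 in h2. lra.
Qed.

Lemma islim_le {I} U (f : I -> R) a c : ufilter U -> U (fun i => f i <= c) -> islim U f a -> a <= c.
Proof.
  intros HU Hc Hf. destruct (Rle_dec a c) as [|Hn]; auto. exfalso.
  pose proof HU as [UT [U0 [UI [US UU]]]].
  destruct (uf_nonempty U _ HU (UI _ _ Hc (Hf (a - c) ltac:(lra)))) as [i [h1 h2]].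
  apply Rabs_def2 in h2. lra.
Qed.

Definition Ulim {I} (U : (I -> Prop) -> Prop) (f : I -> R) : R :=
  epsilon (inhabits 0) (fun L => islim U f L).

Lemma Ulim_spec {I} U (f : I -> R) a b : ufilter U -> (forall i, a <= f i <= b) -> islim U f (Ulim U f).
Proof.
  intros HU Hb. unfold Ulim. apply epsilon_spec. eapply islim_exists; eauto.
Qed.

Lemma Ulim_eq {I} U (f : I -> R) L : ufilter U -> islim U f L -> Ulim U f = L.
Proof.
  intros HU H. eapply islim_unique; eauto. unfold Ulim. apply epsilon_spec. eauto.
Qed.


Lemma ultra_exists (J : Type) (F : (J -> Prop) -> Prop) :
  F (fun _ => True) -> ~ F (fun _ => False) ->
  (forall A B, F A -> F B -> F (fun i => A i /\ B i)) ->
  (forall A B : J -> Prop, (forall i, A i -> B i) -> F A -> F B) ->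
  exists U, ufilter U /\ forall A, F A -> U A.
Proof.
  intros FT F0 FI FS.
  assert (PF : @filter.ProperFilter J F).
  { constructor. exact F0. constructor. exact FT. intros A B HA HB. apply FI; auto.
    intros P Q HPQ. apply FS. exact HPQ. }
  destruct (filter.ultraFilterLemma PF) as [U [UU sFU]].
  exists U. destruct UU as [[U0 [UT UI US]] Umax].
  split; [|exact sFU].
  split; [exact UT|]. split; [exact U0|]. split; [intros; apply UI; auto|].
  split; [intros A B H; apply US; exact H|].
  intros A. destruct (classic (U A)) as [HA|HA]; [left; exact HA|right].
  set (G := fun B : J -> Prop => exists C, U C /\ forall x, C x -> A x -> B x).
  destruct (classic (G (fun _ => False))) as [[C [HC HCA]]|HG].
  - apply (US C); [|exact HC]. intros x Cx Ax. exact (HCA x Cx Ax).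
  - exfalso. apply HA.
    assert (PG : @filter.ProperFilter J G).
    { constructor. exact HG. constructor.
      - exists (fun _ => True). split; [exact UT|]. intros; exact I.
      - intros B1 B2 [C1 [H1 K1]] [C2 [H2 K2]]. exists (fun x => C1 x /\ C2 x).
        split. apply UI; auto. intros x [c1 c2] Ax. split; [apply K1|apply K2]; auto.
      - intros P Q HPQ [C [HC K]]. exists C. split; auto. }
    assert (sUG : forall B, U B -> G B).
    { intros B HB. exists B. split; auto. }
    pose proof (Umax G PG sUG) as E. rewrite <- E.
    exists (fun _ => True). split; [exact UT|]. intros; auto.
Qed.

Fixpoint sumN (f : nat -> R) (n : nat) : R :=
  match n with O => 0 | S m => sumN f m + f m end.

Lemma sumN_ext f g n : (forall i, (i < n)%nat -> f i = g i) -> sumN f n = sumN g n.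
Proof. induction n; simpl; intros H; auto. rewrite IHn, H; auto. Qed.

Lemma sumN_plus f g n : sumN (fun i => f i + g i) n = sumN f n + sumN g n.
Proof. induction n; simpl; [ring|rewrite IHn; ring]. Qed.

Lemma sumN_scal c f n : sumN (fun i => c * f i) n = c * sumN f n.
Proof. induction n; simpl; [ring|rewrite IHn; ring]. Qed.

Lemma sumN_const c n : sumN (fun _ => c) n = INR n * c.
Proof. induction n; simpl sumN; [simpl; ring|rewrite IHn, S_INR; ring]. Qed.

Lemma sumN_nonneg f n : (forall i, (i < n)%nat -> 0 <= f i) -> 0 <= sumN f n.
Proof. induction n; simpl; intros H; [lra|]. pose proof (H n (Nat.lt_succ_diag_r n)).
  assert (0 <= sumN f n) by (apply IHn; intros; apply H; lia). lra. Qed.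

Lemma sumN_ge_term f n i : (forall j, (j < n)%nat -> 0 <= f j) -> (i < n)%nat -> f i <= sumN f n.
Proof.
  induction n; intros H Hi; [lia|]. simpl.
  assert (0 <= sumN f n) by (apply sumN_nonneg; intros; apply H; lia).
  destruct (Nat.eq_dec i n) as [->|Hne]; [lra|].
  assert (f i <= sumN f n) by (apply IHn; [intros; apply H; lia|lia]).
  pose proof (H n (Nat.lt_succ_diag_r n)). lra.
Qed.

Fixpoint Lf {X : Type} (step : (nat -> R) -> X) (l : X -> nat -> R) (k : nat) : nat -> R :=
  match k with
  | O => fun _ => 0
  | S k' => fun i => Lf step l k' i + l (step (Lf step l k')) i
  end.

Lemma Lf_sum {X} step (l : X -> nat -> R) K i :
  sumN (fun k => l (step (Lf step l k)) i) K = Lf step l K i.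
Proof. induction K; simpl; auto. rewrite IHK; auto. Qed.

Lemma mw (X : Type) (x0 : X) (n : nat) (l : X -> nat -> R) (c c2 eta : R) :
  (0 < n)%nat -> (forall x i, l x i = 0 \/ l x i = 1) -> 0 < eta -> 0 < c2 -> c2 * (1 + eta) < c ->
  (forall p : nat -> R, (forall i, 0 <= p i) -> sumN p n = 1 ->
     exists x, sumN (fun i => p i * l x i) n > c) ->
  exists K (ws : nat -> X), (0 < K)%nat /\
    forall i, (i < n)%nat -> sumN (fun k => l (ws k) i) K >= c2 * INR K.
Proof.
  intros Hn Hl Heta Hc2 Hc Hyp.
  set (W := fun L : nat -> R => sumN (fun i => exp (- eta * L i)) n).
  set (po := fun (L : nat -> R) i => exp (- eta * L i) / W L).
  set (g := fun p : nat -> R => epsilon (inhabits x0) (fun x => sumN (fun i => p i * l x i) n > c)).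
  assert (Wpos : forall L, 0 < W L).
  { intros L. unfold W. destruct n as [|n']; [lia|]. simpl.
    assert (0 <= sumN (fun i => exp (- eta * L i)) n') by (apply sumN_nonneg; intros; left; apply exp_pos).
    pose proof (exp_pos (- eta * L n')). lra. }
  assert (gspec : forall L, sumN (fun i => po L i * l (g (po L)) i) n > c).
  { intros L. unfold g. apply epsilon_spec. apply Hyp.
    - intros i. unfold po. left. apply Rdiv_lt_0_compat; [apply exp_pos|apply Wpos].
    - unfold po. unfold Rdiv. rewrite (sumN_ext _ (fun i => / W L * exp (- eta * L i))).
      + rewrite sumN_scal. fold (W L). field. apply Rgt_not_eq, Wpos.
      + intros; ring. }
  set (a := 1 - exp (- eta)).
  assert (Ha : eta / (1 + eta) <= a).
  { unfold a. pose proof (exp_ineq1_le eta). rewrite exp_Ropp.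
    assert (0 < exp eta) by apply exp_pos.
    apply (Rmult_le_reg_r (exp eta * (1 + eta))). nra.
    field_simplify; try lra. }
  set (step := fun L => g (po L)).
  assert (Hstep : forall k, W (Lf step l (S k)) <= W (Lf step l k) * exp (- (a * c))).
  { intros k. set (L := Lf step l k).
    assert (E1 : W (Lf step l (S k)) = W L - a * sumN (fun i => exp (- eta * L i) * l (step L) i) n).
    { unfold W. simpl Lf. fold L. rewrite <- (sumN_scal a).
      replace (sumN (fun i => exp (- eta * L i)) n - sumN (fun i => a * (exp (- eta * L i) * l (step L) i)) n)
        with (sumN (fun i => exp (- eta * L i) + (-1) * (a * (exp (- eta * L i) * l (step L) i))) n)
        by (rewrite sumN_plus, sumN_scal; ring).
      apply sumN_ext. intros i _.
      replace (- eta * (L i + l (step L) i)) with (- eta * L i + - eta * l (step L) i) by ring.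
      rewrite exp_plus. unfold a. destruct (Hl (step L) i) as [ H0 | H0 ]; rewrite H0.
      + rewrite Rmult_0_r, exp_0. ring.
      + rewrite Rmult_1_r. ring. }
    assert (E2 : sumN (fun i => exp (- eta * L i) * l (step L) i) n > W L * c).
    { rewrite (sumN_ext _ (fun i => W L * (po L i * l (g (po L)) i))).
      - rewrite sumN_scal. pose proof (gspec L). pose proof (Wpos L).
        apply Rmult_gt_compat_l; auto.
      - intros i _. unfold step. set (xx := g (po L)). unfold po. field. apply Rgt_not_eq, Wpos. }
    assert (apos : 0 < a).
    { assert (0 < eta / (1 + eta)) by (apply Rdiv_lt_0_compat; lra). lra. }
    pose proof (exp_ineq1_le (- (a * c))). pose proof (Wpos L).
    rewrite E1. apply Rle_trans with (W L * (1 + - (a * c))); [nra|].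
    apply Rmult_le_compat_l; lra. }
  assert (Hbound : forall k, W (Lf step l k) <= INR n * exp (- (a * c) * INR k)).
  { induction k.
    - simpl INR. rewrite Rmult_0_r, exp_0, Rmult_1_r. unfold W. simpl Lf.
      rewrite (sumN_ext _ (fun _ => 1)). rewrite sumN_const; lra.
      intros; rewrite Rmult_0_r, exp_0; auto.
    - eapply Rle_trans; [apply Hstep|]. rewrite S_INR.
      replace (- (a * c) * (INR k + 1)) with (- (a * c) * INR k + - (a * c)) by ring.
      rewrite exp_plus, <- Rmult_assoc. apply Rmult_le_compat_r; [left; apply exp_pos|auto]. }
  set (th := a * c - eta * c2).
  assert (Hth : 0 < th).
  { unfold th. assert (eta / (1 + eta) * c <= a * c).
    { apply Rmult_le_compat_r; [|auto]. nra. }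
    assert (eta * c2 < eta / (1 + eta) * c).
    { unfold Rdiv. apply (Rmult_lt_reg_r (1 + eta)); [lra|].
      replace (eta * / (1 + eta) * c * (1 + eta)) with (eta * c) by (field; lra). nra. }
    lra. }
  destruct (INR_archimed th (INR n) Hth) as [K HK].
  exists K, (fun k => step (Lf step l k)). split.
  { destruct K; [simpl in HK; pose proof (pos_INR n); lra|lia]. }
  intros i Hi. rewrite Lf_sum.
  destruct (Rge_dec (Lf step l K i) (c2 * INR K)) as [|Hlt]; auto. exfalso.
  apply Rnot_ge_lt in Hlt.
  assert (A1 : exp (- eta * Lf step l K i) <= W (Lf step l K)).
  { unfold W. apply (sumN_ge_term (fun i0 => exp (- eta * Lf step l K i0))); auto.
    intros; left; apply exp_pos. }
  assert (A2 : exp (- eta * (c2 * INR K)) < exp (- eta * Lf step l K i)).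
  { apply exp_increasing. nra. }
  pose proof (Hbound K).
  assert (A3 : exp (th * INR K) < INR n).
  { unfold th. replace ((a * c - eta * c2) * INR K) with (- eta * (c2 * INR K) - (- (a * c) * INR K)) by ring.
    unfold Rminus. rewrite exp_plus, exp_Ropp.
    assert (0 < exp (- (a * c) * INR K)) by apply exp_pos.
    apply (Rmult_lt_reg_r (exp (- (a * c) * INR K))); auto.
    field_simplify; try lra. }
  pose proof (exp_ineq1_le (th * INR K)). lra.
Qed.

Fixpoint words (n : nat) : list (list bool) :=
  match n with
  | O => nil :: nil
  | S m => map (cons false) (words m) ++ map (cons true) (words m)
  end.

Lemma words_len n v : In v (words n) <-> length v = n.
Proof.
  revert v; induction n; intros v; simpl.
  - split; [intros [<-|[]]; auto|destruct v; simpl; try discriminate; auto].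
  - rewrite in_app_iff, !in_map_iff. split.
    + intros [[w [<- Hw]]|[w [<- Hw]]]; simpl; f_equal; apply IHn; auto.
    + destruct v as [|b w]; simpl; intros H; [discriminate|]. injection H as H.
      destruct b; [right|left]; exists w; split; auto; apply IHn; auto.
Qed.

Lemma words_nodup n : NoDup (words n).
Proof.
  induction n; simpl. constructor; [simpl; auto|constructor].
  apply NoDup_app.
  - apply NoDup_map_NoDup_ForallPairs; auto. intros a b _ _ H; injection H; auto.
  - apply NoDup_map_NoDup_ForallPairs; auto. intros a b _ _ H; injection H; auto.
  - intros x H1 H2. apply in_map_iff in H1, H2. destruct H1 as [a [<- _]]. destruct H2 as [b [H _]]. discriminate.
Qed.

Definition pt (u : list bool) : Omega := fun i => nth i (u ++ true :: nil) false.

Lemma pt_len u : pt u (length u) = true /\ forall i, (length u < i)%nat -> pt u i = false.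
Proof.
  unfold pt. split.
  - rewrite app_nth2 by lia. rewrite Nat.sub_diag. reflexivity.
  - intros i Hi. rewrite nth_overflow; auto. rewrite length_app; simpl; lia.
Qed.

Lemma pt_inj u u' : pt u = pt u' -> u = u'.
Proof.
  intros H.
  assert (Hl : length u = length u').
  { destruct (pt_len u) as [a1 b1]. destruct (pt_len u') as [a2 b2].
    destruct (Nat.lt_trichotomy (length u) (length u')) as [Hlt|[Heq|Hlt]]; auto.
    - rewrite H in b1. rewrite b1 in a2 by lia. discriminate.
    - rewrite <- H in b2. rewrite b2 in a1 by lia. discriminate. }
  apply nth_ext with (d := false) (d' := false); auto.
  intros i Hi. pose proof (f_equal (fun f => f i) H) as Hi'. unfold pt in Hi'. simpl in Hi'.
  rewrite !app_nth1 in Hi' by lia. exact Hi'.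
Qed.

Definition prefix (x : Omega) (n : nat) : list bool := map x (seq 0 n).

Lemma prefix_len x n : length (prefix x n) = n.
Proof. unfold prefix. rewrite length_map, length_seq. auto. Qed.

Lemma pt_prefix x n v i : (i < n)%nat -> pt (prefix x n ++ v) i = x i.
Proof.
  intros Hi. unfold pt. rewrite <- app_assoc. rewrite app_nth1 by (rewrite prefix_len; auto).
  unfold prefix. rewrite nth_indep with (d' := x 0%nat) by (rewrite length_map, length_seq; auto).
  rewrite map_nth, seq_nth; auto.
Qed.

Definition indP (P : Prop) : R := if excluded_middle_informative P then 1 else 0.
Definition sumL {A} (f : A -> R) (l : list A) : R := fold_right (fun a acc => f a + acc) 0 l.

Lemma indP_T (P : Prop) : P -> indP P = 1.
Proof. unfold indP; destruct (excluded_middle_informative P); tauto. Qed.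
Lemma indP_F (P : Prop) : ~ P -> indP P = 0.
Proof. unfold indP; destruct (excluded_middle_informative P); tauto. Qed.
Lemma indP_bnd (P : Prop) : 0 <= indP P <= 1.
Proof. unfold indP; destruct (excluded_middle_informative P); lra. Qed.
Lemma indP_or (P Q : Prop) : (P -> Q -> False) -> indP (P \/ Q) = indP P + indP Q.
Proof.
  intros H. destruct (classic P) as [p|np]; destruct (classic Q) as [q|nq].
  - exfalso; auto.
  - rewrite indP_T, (indP_T P), (indP_F Q); auto; lra.
  - rewrite indP_T, (indP_F P), (indP_T Q); auto; lra.
  - rewrite indP_F, (indP_F P), (indP_F Q); auto; try lra. tauto.
Qed.

Lemma sumL_app {A} (f : A -> R) l1 l2 : sumL f (l1 ++ l2) = sumL f l1 + sumL f l2.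
Proof. induction l1; simpl; [ring|]. unfold sumL in *; simpl. rewrite IHl1; ring. Qed.
Lemma sumL_plus {A} (f g : A -> R) l : sumL (fun a => f a + g a) l = sumL f l + sumL g l.
Proof. induction l; unfold sumL in *; simpl; [ring|rewrite IHl; ring]. Qed.
Lemma sumL_scal {A} c (f : A -> R) l : sumL (fun a => c * f a) l = c * sumL f l.
Proof. induction l; unfold sumL in *; simpl; [ring|rewrite IHl; ring]. Qed.
Lemma sumL_ext {A} (f g : A -> R) l : (forall a, In a l -> f a = g a) -> sumL f l = sumL g l.
Proof. induction l; unfold sumL in *; simpl; intros H; auto. rewrite IHl, H; auto. Qed.
Lemma sumL_le {A} (f g : A -> R) l : (forall a, In a l -> f a <= g a) -> sumL f l <= sumL g l.
Proof. induction l; unfold sumL in *; simpl; intros H; [lra|].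
  pose proof (H a (or_introl eq_refl)). assert (fold_right (fun a0 acc => f a0 + acc) 0 l <= fold_right (fun a0 acc => g a0 + acc) 0 l) by (apply IHl; auto). lra. Qed.
Lemma sumL_const {A} c (l : list A) : sumL (fun _ => c) l = INR (length l) * c.
Proof. induction l; unfold sumL in *; simpl length; [simpl; ring|]. simpl fold_right. rewrite IHl, S_INR. ring. Qed.
Lemma sumL_map_seq {A} (f : A -> R) g n : sumL f (map g (seq 0 n)) = sumN (fun i => f (g i)) n.
Proof. induction n; [reflexivity|]. rewrite seq_S, map_app, sumL_app, IHn. simpl. unfold sumL; simpl. ring. Qed.

Lemma words_length n : INR (length (words n)) = 2 ^ n.
Proof.
  induction n; [reflexivity|]. simpl words. rewrite length_app, !length_map, plus_INR, IHn. simpl. ring.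
Qed.

Definition cnt (E : event) (x : Omega) (n : nat) : R :=
  sumL (fun v => indP (E (pt (prefix x n ++ v)))) (words n).
Definition seqE (E : event) (x : Omega) (n : nat) : R := cnt E x n / 2 ^ n.

Lemma seqE_bnd E x n : 0 <= seqE E x n <= 1.
Proof.
  unfold seqE, cnt. pose proof (pow_lt 2 n ltac:(lra)).
  assert (0 <= sumL (fun v => indP (E (pt (prefix x n ++ v)))) (words n)).
  { rewrite <- (Rmult_0_r (INR (length (words n)))), <- sumL_const. apply sumL_le. intros; apply indP_bnd. }
  assert (sumL (fun v => indP (E (pt (prefix x n ++ v)))) (words n) <= 2 ^ n).
  { rewrite <- words_length, <- (Rmult_1_r (INR (length (words n)))), <- sumL_const. apply sumL_le. intros; apply indP_bnd. }
  split. apply Rmult_le_pos; [auto|left; apply Rinv_0_lt_compat; auto].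
  apply (Rmult_le_reg_r (2 ^ n)); auto. unfold Rdiv. rewrite Rmult_assoc, Rinv_l by lra. lra.
Qed.

Definition cofin (V : (nat -> Prop) -> Prop) := forall N, V (fun n => (N <= n)%nat).

Definition lam (V : (nat -> Prop) -> Prop) (x : Omega) (E : event) : R := Ulim V (seqE E x).

Lemma lam_spec V x E : ufilter V -> islim V (seqE E x) (lam V x E).
Proof. intros HV. apply (Ulim_spec V _ 0 1 HV). intros; apply seqE_bnd. Qed.

Lemma lam_bnd V x E : ufilter V -> 0 <= lam V x E <= 1.
Proof.
  intros HV. pose proof (lam_spec V x E HV). pose proof HV as [UT _]. split.
  - eapply islim_ge; eauto. eapply (proj1 (proj2 (proj2 (proj2 HV)))); [|exact UT]. intros; apply seqE_bnd.
  - eapply islim_le; eauto. eapply (proj1 (proj2 (proj2 (proj2 HV)))); [|exact UT]. intros; apply seqE_bnd.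
Qed.

Lemma lam_add V x E F : ufilter V -> (forall w, E w -> F w -> False) ->
  lam V x (fun w => E w \/ F w) = lam V x E + lam V x F.
Proof.
  intros HV Hd. apply Ulim_eq; auto.
  apply islim_ev with (f := fun n => seqE E x n + seqE F x n); auto.
  - eapply (proj1 (proj2 (proj2 (proj2 HV)))); [|exact (proj1 HV)]. intros n _.
    unfold seqE, cnt. unfold Rdiv. rewrite <- Rmult_plus_distr_r, <- sumL_plus. f_equal.
    apply sumL_ext. intros v _. symmetry. apply indP_or. intros; eapply Hd; eauto.
  - apply islim_plus; auto; apply lam_spec; auto.
Qed.

Lemma lam_true V x : ufilter V -> lam V x (fun _ => True) = 1.
Proof.
  intros HV. apply Ulim_eq; auto. apply islim_ev with (f := fun _ => 1); auto.
  - eapply (proj1 (proj2 (proj2 (proj2 HV)))); [|exact (proj1 HV)]. intros n _.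
    unfold seqE, cnt. rewrite (sumL_ext _ (fun _ => 1)) by (intros; apply indP_T; auto).
    rewrite sumL_const, words_length. field. apply pow_nonzero; lra.
  - apply islim_const; auto.
Qed.

Lemma lam_open V x O : ufilter V -> cofin V -> is_open O -> O x -> lam V x O = 1.
Proof.
  intros HV HC HO Ox. destruct (HO x Ox) as [t Ht].
  apply Ulim_eq; auto. apply islim_ev with (f := fun _ => 1); auto.
  - eapply (proj1 (proj2 (proj2 (proj2 HV)))); [|exact (HC t)]. intros n Hn.
    unfold seqE, cnt. rewrite (sumL_ext _ (fun _ => 1)).
    + rewrite sumL_const, words_length. field. apply pow_nonzero; lra.
    + intros v _. apply indP_T. apply Ht. intros i Hi. apply pt_prefix. cbv beta in Hn. lia.
  - apply islim_const; auto.
Qed.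

Lemma lam_ge_ind V x O : ufilter V -> cofin V -> is_open O -> indP (O x) <= lam V x O.
Proof.
  intros HV HC HO. destruct (classic (O x)) as [h|h].
  - rewrite indP_T, lam_open; auto; lra.
  - rewrite indP_F by auto. apply lam_bnd; auto.
Qed.

Lemma app_len_inj {A} (x1 x2 y1 y2 : list A) : x1 ++ x2 = y1 ++ y2 -> length x1 = length y1 -> x1 = y1 /\ x2 = y2.
Proof.
  intros H Hl. destruct (app_eq_app _ _ _ _ H) as [l [[H1 H2]|[H1 H2]]]; subst;
  rewrite length_app in Hl; destruct l; simpl in *; try lia; rewrite app_nil_r; auto.
Qed.

Lemma sumL_cons {A} (f : A -> R) a l : sumL f (a :: l) = f a + sumL f l.
Proof. reflexivity. Qed.

Lemma nat_floor_aux N r : 0 <= r < INR N -> exists m : nat, INR m <= r < INR m + 1.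
Proof.
  induction N; intros [H0 H1]; simpl in H1; [lra|].
  destruct (Rlt_dec r (INR N)) as [h|h]; [apply IHN; lra|].
  exists N. rewrite S_INR in H1 || idtac. destruct N; simpl in *; lra.
Qed.

Lemma nat_floor r : 0 <= r -> exists m : nat, INR m <= r < INR m + 1.
Proof.
  intros H. destruct (INR_archimed 1 r ltac:(lra)) as [N HN]. apply (nat_floor_aux N). lra.
Qed.

Lemma select (l : list (list bool)) : NoDup l -> forall (e : list bool -> Prop) (k : nat),
  INR k <= sumL (fun v => indP (e v)) l ->
  exists s : list bool -> Prop, (forall v, s v -> e v) /\ sumL (fun v => indP (s v)) l = INR k.
Proof.
  induction l as [|a l IH]; intros Hnd e k Hk.
  - unfold sumL in Hk; simpl in Hk. destruct k; [|rewrite S_INR in Hk; pose proof (pos_INR k); lra].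
    exists (fun _ => False). split; [tauto|reflexivity].
  - inversion Hnd as [|a' l' Hna Hnd']; subst.
    rewrite sumL_cons in Hk.
    destruct k as [|k].
    + exists (fun _ => False). split; [tauto|]. rewrite sumL_cons.
      rewrite indP_F by tauto.
      rewrite sumL_const; simpl; ring.
    + destruct (classic (e a)) as [ea|nea].
      * rewrite indP_T in Hk by auto. rewrite S_INR in Hk.
        destruct (IH Hnd' e k ltac:(lra)) as [s [Hs1 Hs2]].
        exists (fun v => v = a \/ (v <> a /\ s v)). split.
        { intros v [->|[_ h]]; auto. }
        rewrite sumL_cons, indP_T by auto.
        rewrite (sumL_ext _ (fun v => indP (s v))). rewrite Hs2, S_INR; ring.
        intros v Hv. assert (v <> a) by (intros ->; auto).
        destruct (classic (s v)); [rewrite !indP_T by tauto|rewrite !indP_F by tauto]; auto.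
      * rewrite indP_F in Hk by auto.
        destruct (IH Hnd' e (S k) ltac:(lra)) as [s [Hs1 Hs2]].
        exists (fun v => v <> a /\ s v). split.
        { intros v [_ h]; auto. }
        rewrite sumL_cons, indP_F by tauto.
        rewrite (sumL_ext _ (fun v => indP (s v))). rewrite Hs2; ring.
        intros v Hv. assert (v <> a) by (intros ->; auto).
        destruct (classic (s v)); [rewrite !indP_T by tauto|rewrite !indP_F by tauto]; auto.
Qed.

Lemma lam_split V E (alpha : R) : ufilter V -> cofin V -> 0 <= alpha <= 1 ->
  exists F : event, (forall w, F w -> E w) /\ (forall w, F w -> exists u, w = pt u) /\
    forall x, lam V x F = alpha * lam V x E.
Proof.
  intros HV HC Ha.
  set (c := fun p : list bool => sumL (fun v => indP (E (pt (p ++ v)))) (words (length p))).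
  assert (c0 : forall p, 0 <= c p <= INR (length (words (length p)))).
  { intros p. unfold c. split.
    - rewrite <- (Rmult_0_r (INR (length (words (length p))))), <- sumL_const. apply sumL_le. intros; apply indP_bnd.
    - rewrite <- (Rmult_1_r (INR (length (words (length p))))), <- sumL_const. apply sumL_le. intros; apply indP_bnd. }
  assert (Hsel : forall p, exists s : list bool -> Prop, (forall v, s v -> E (pt (p ++ v))) /\
     exists m : nat, sumL (fun v => indP (s v)) (words (length p)) = INR m /\ INR m <= alpha * c p < INR m + 1).
  { intros p. destruct (nat_floor (alpha * c p)) as [m Hm].
    { apply Rmult_le_pos; [lra|apply c0]. }
    destruct (select (words (length p)) (words_nodup _) (fun v => E (pt (p ++ v))) m) as [s [Hs1 Hs2]].
    { fold (c p). assert (alpha * c p <= c p) by (pose proof (c0 p); nra). lra. }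
    exists s. split; auto. exists m; auto. }
  set (sel := fun p => proj1_sig (constructive_indefinite_description _ (Hsel p))).
  assert (selP : forall p, (forall v, sel p v -> E (pt (p ++ v))) /\
     exists m : nat, sumL (fun v => indP (sel p v)) (words (length p)) = INR m /\ INR m <= alpha * c p < INR m + 1).
  { intros p. exact (proj2_sig (constructive_indefinite_description _ (Hsel p))). }
  clearbody sel.
  set (F := fun w => exists p v, length v = length p /\ w = pt (p ++ v) /\ sel p v).
  exists F. split; [|split].
  - intros w [p [v [_ [-> h]]]]. apply (proj1 (selP p)). auto.
  - intros w [p [v [_ [-> _]]]]. eauto.
  - intros x. apply Ulim_eq; auto.
    assert (keyF : forall n, cnt F x n = sumL (fun v => indP (sel (prefix x n) v)) (words n)).
    { intros n. unfold cnt. apply sumL_ext. intros v Hv. apply words_len in Hv.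
      destruct (classic (sel (prefix x n) v)) as [h|h].
      - rewrite !indP_T; auto. exists (prefix x n), v. rewrite prefix_len. auto.
      - rewrite !indP_F; auto. intros [p [v' [Hl [Heq Hs]]]]. apply pt_inj in Heq.
        assert (Hlp : length p = n).
        { pose proof (f_equal (@length bool) Heq). rewrite !length_app, prefix_len in H. lia. }
        assert (Hpl : length p = length (prefix x n)) by (rewrite prefix_len; auto).
        destruct (app_len_inj _ _ _ _ Heq (eq_sym Hpl)) as [E1 E2]. subst. auto. }
    set (d := fun n => seqE F x n - alpha * seqE E x n).
    assert (Hd : forall n, Rabs (d n) <= (/ 2) ^ n).
    { intros n. unfold d, seqE. rewrite keyF. destruct (selP (prefix x n)) as [_ [m [Hm1 Hm2]]].
      rewrite prefix_len in Hm1. rewrite Hm1. unfold c in Hm2. rewrite prefix_len in Hm2.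
      fold (cnt E x n) in Hm2. rewrite pow_inv.
      pose proof (pow_lt 2 n ltac:(lra)).
      replace (INR m / 2 ^ n - alpha * (cnt E x n / 2 ^ n)) with ((INR m - alpha * cnt E x n) * / 2 ^ n) by (field; lra).
      rewrite Rabs_mult, (Rabs_right (/ 2 ^ n)) by (left; apply Rinv_0_lt_compat; auto).
      rewrite <- (Rmult_1_l (/ 2 ^ n)) at 2. apply Rmult_le_compat_r; [left; apply Rinv_0_lt_compat; auto|].
      apply Rabs_le; lra. }
    assert (Hd0 : islim V d 0).
    { intros e He. destruct (pow_lt_1_zero (/ 2) ltac:(rewrite Rabs_right; lra) e He) as [N HN].
      eapply (proj1 (proj2 (proj2 (proj2 HV)))); [|exact (HC N)]. intros n Hn. cbv beta in Hn.
      rewrite Rminus_0_r. eapply Rle_lt_trans; [apply Hd|]. specialize (HN n Hn).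
      rewrite Rabs_right in HN; auto. apply Rle_ge, pow_le; lra. }
    apply islim_ev with (f := fun n => d n + alpha * seqE E x n); auto.
    + eapply (proj1 (proj2 (proj2 (proj2 HV)))); [|exact (proj1 HV)]. intros n _. unfold d. ring.
    + replace (alpha * lam V x E) with (0 + alpha * lam V x E) by ring.
      apply islim_plus; auto. apply islim_scal; auto. apply lam_spec; auto.
Qed.

Lemma ev_ext (A B : event) : (forall w, A w <-> B w) -> A = B.
Proof. intros H. apply functional_extensionality; intro w. apply propositional_extensionality; auto. Qed.

Lemma S_empty S : is_sigma_algebra S -> S (fun _ => False).
Proof.
  intros [HT [HC HU]]. replace (fun _ : Omega => False) with (fun w : Omega => ~ (fun _ => True) w).
  apply HC; auto. apply ev_ext; intros w; tauto.
Qed.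

Lemma S_or S A B : is_sigma_algebra S -> S A -> S B -> S (fun w => A w \/ B w).
Proof.
  intros [HT [HC HU]] HA HB.
  replace (fun w => A w \/ B w) with (fun w => exists n, (fun k => match k with O => A | _ => B end) n w).
  - apply HU. intros [|k]; auto.
  - apply ev_ext; intros w. split.
    + intros [[|k] h]; auto.
    + intros [h|h]; [exists O|exists 1%nat]; auto.
Qed.

Lemma S_single S w0 : is_sigma_algebra S -> contains_cylinders S -> S (fun w => w = w0).
Proof.
  intros HS Hcyl. pose proof HS as [HT [HC HU]].
  replace (fun w => w = w0) with (fun w => ~ (exists t, (fun t w => ~ cylinder w0 t w) t w)).
  - apply HC. apply HU. intros t. apply HC. apply Hcyl.
  - apply ev_ext; intros w. split.
    + intros H. apply functional_extensionality. intros i. apply NNPP. intros H'. apply H. exists (i + 1)%nat.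
      intros Hc. apply H'. apply Hc. lia.
    + intros -> [t Ht]. apply Ht. intros i _; auto.
Qed.

Lemma S_finite S ul (Q : list bool -> Prop) : is_sigma_algebra S -> contains_cylinders S ->
  S (fun w => exists u, In u ul /\ Q u /\ w = pt u).
Proof.
  intros HS Hcyl. induction ul as [|a ul IH].
  - replace (fun w : Omega => exists u, In u nil /\ Q u /\ w = pt u) with (fun _ : Omega => False).
    apply S_empty; auto. apply ev_ext; intros w; split; [tauto|intros [u [[] _]]].
  - destruct (classic (Q a)) as [qa|qa].
    + replace (fun w => exists u, In u (a :: ul) /\ Q u /\ w = pt u) with
        (fun w => w = pt a \/ (exists u, In u ul /\ Q u /\ w = pt u)).
      apply S_or; auto. apply S_single; auto.
      apply ev_ext; intros w; split.
      * intros [->|[u [h1 h2]]]; [exists a; simpl; auto|exists u; simpl; auto].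
      * intros [u [[<-|h1] h2]]; [left; tauto|right; exists u; auto].
    + replace (fun w => exists u, In u (a :: ul) /\ Q u /\ w = pt u) with
        (fun w => exists u, In u ul /\ Q u /\ w = pt u); auto.
      apply ev_ext; intros w; split.
      * intros [u [h1 h2]]; exists u; simpl; auto.
      * intros [u [[<-|h1] h2]]; [tauto|exists u; auto].
Qed.

Lemma S_ptset S F : is_sigma_algebra S -> contains_cylinders S -> (forall w, F w -> exists u, w = pt u) -> S F.
Proof.
  intros HS Hcyl HF. pose proof HS as [HT [HC HU]].
  replace F with (fun w => exists n, (fun n w => exists u, In u (words n) /\ F (pt u) /\ w = pt u) n w).
  - apply HU. intros n. apply S_finite; auto.
  - apply ev_ext; intros w; split.
    + intros [n [u [_ [h ->]]]]; auto.
    + intros h. destruct (HF w h) as [u ->]. exists (length u), u. split; [apply words_len; auto|auto].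
Qed.

Definition avg (V : (nat -> Prop) -> Prop) (ms : list Omega) (E : event) : R :=
  sumL (fun w => lam V w E) ms / INR (length ms).

Definition Pstar (V : (nat -> Prop) -> Prop) (U : (list setfun -> Prop) -> Prop)
  (ms : list setfun -> list Omega) (E : event) : R := Ulim U (fun A => avg V (ms A) E).

Lemma avg_bnd V ms E : ufilter V -> ms <> nil -> 0 <= avg V ms E <= 1.
Proof.
  intros HV Hms. unfold avg.
  assert (Hl : 0 < INR (length ms)) by (destruct ms; [congruence|simpl length; rewrite S_INR; pose proof (pos_INR (length ms)); lra]).
  assert (0 <= sumL (fun w => lam V w E) ms).
  { rewrite <- (Rmult_0_r (INR (length ms))), <- sumL_const. apply sumL_le. intros; apply lam_bnd; auto. }
  assert (sumL (fun w => lam V w E) ms <= INR (length ms)).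
  { rewrite <- (Rmult_1_r (INR (length ms))), <- sumL_const. apply sumL_le. intros; apply lam_bnd; auto. }
  split. apply Rmult_le_pos; [auto|left; apply Rinv_0_lt_compat; auto].
  apply (Rmult_le_reg_r (INR (length ms))); auto. unfold Rdiv. rewrite Rmult_assoc, Rinv_l by lra. lra.
Qed.

Lemma Pstar_spec V U ms E : ufilter V -> ufilter U -> (forall A, ms A <> nil) ->
  islim U (fun A => avg V (ms A) E) (Pstar V U ms E).
Proof. intros HV HU Hms. apply (Ulim_spec U _ 0 1 HU). intros; apply avg_bnd; auto. Qed.

Lemma Pstar_opinion S V U ms : is_sigma_algebra S -> contains_cylinders S ->
  ufilter V -> cofin V -> ufilter U -> (forall A, ms A <> nil) -> opinion S (Pstar V U ms).
Proof.
  intros HS Hcyl HV HCV HU Hms.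
  pose proof HU as [UT [U0 [UI [US UU]]]].
  split; [split; [|split]|].
  - intros E _. eapply islim_ge; [exact HU| |apply Pstar_spec; auto].
    apply (US _ _) with (2 := UT). intros; apply avg_bnd; auto.
  - apply Ulim_eq; auto. apply islim_ev with (f := fun _ => 1); auto; [|apply islim_const; auto].
    apply (US _ _) with (2 := UT). intros A _. unfold avg.
    rewrite (sumL_ext _ (fun _ => 1)) by (intros; apply lam_true; auto).
    rewrite sumL_const. field. pose proof (Hms A) as HmA. destruct (ms A); [congruence|]. simpl length. rewrite S_INR. pose proof (pos_INR (length l)). lra.
  - intros E F _ _ Hd. apply Ulim_eq; auto.
    apply islim_ev with (f := fun A => avg V (ms A) E + avg V (ms A) F); auto.
    + apply (US _ _) with (2 := UT). intros A _. unfold avg. unfold Rdiv. rewrite <- Rmult_plus_distr_r, <- sumL_plus.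
      f_equal. apply sumL_ext. intros. rewrite lam_add; auto.
    + apply islim_plus; auto; apply Pstar_spec; auto.
  - intros E alpha _ Ha. destruct (lam_split V E alpha HV HCV Ha) as [F [HF1 [HF2 HF3]]].
    exists F. split; [apply S_ptset; auto|split; [exact HF1|]].
    apply Ulim_eq; auto.
    apply islim_ev with (f := fun A => alpha * avg V (ms A) E); auto.
    + apply (US _ _) with (2 := UT). intros A _. unfold avg. unfold Rdiv. rewrite <- Rmult_assoc, <- sumL_scal.
      f_equal. apply sumL_ext. intros. rewrite HF3; auto.
    + apply islim_scal; auto; apply Pstar_spec; auto.
Qed.

Lemma mass_eq (z : list (setfun * R)) (A : setfun -> Prop) :
  mass z A = sumL (fun Pw => indP (A (fst Pw)) * snd Pw) z.
Proof.
  induction z as [|[P w] z IH]; [reflexivity|]. rewrite sumL_cons. cbn [mass fst snd]. rewrite IH.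
  unfold indP. destruct (excluded_middle_informative (A P)); ring.
Qed.

Lemma ms_exists S (T : setfun -> event) (c c2 eta : R) (A : list setfun) :
  0 < eta -> 0 < c2 -> c2 * (1 + eta) < c ->
  (forall z, strategy S z -> exists w, sumL (fun Pw => indP (T (fst Pw) w) * snd Pw) z > c) ->
  exists ms : list Omega, ms <> nil /\
    forall Q, In Q A -> opinion S Q -> sumL (fun w => indP (T Q w)) ms >= c2 * INR (length ms).
Proof.
  intros Heta Hc2 Hc Hyp.
  set (B := filter (fun Q => if excluded_middle_informative (opinion S Q) then true else false) A).
  assert (HB : forall Q, In Q A -> opinion S Q -> In Q B).
  { intros Q h1 h2. unfold B. apply filter_In. split; auto.
    destruct (excluded_middle_informative (opinion S Q)); tauto. }
  assert (HB2 : forall Q, In Q B -> opinion S Q).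
  { intros Q h. unfold B in h. apply filter_In in h. destruct h as [_ h].
    destruct (excluded_middle_informative (opinion S Q)); auto; discriminate. }
  set (n := length B).
  destruct n as [|n'] eqn:En.
  - exists ((fun _ => false) :: nil). split; [discriminate|].
    intros Q h1 h2. specialize (HB Q h1 h2). destruct B; [destruct HB|simpl in En; discriminate].
  - set (d := fun _ : event => 0).
    set (l := fun (w : Omega) (i : nat) => indP (T (nth i B d) w)).
    destruct (mw Omega (fun _ => false) n l c c2 eta) as [K [ws [HK Hws]]]; auto.
    + lia.
    + intros w i. unfold l, indP. destruct (excluded_middle_informative _); auto.
    + intros p Hp Hs.
      set (z := map (fun i => (nth i B d, p i)) (seq 0 n)).
      assert (Hz : strategy S z).
      { split.
        - intros Pw HPw. unfold z in HPw. apply in_map_iff in HPw. destruct HPw as [i [<- Hi]].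
          apply in_seq in Hi. simpl. split; auto. apply HB2. apply nth_In. lia.
        - change (sumL snd z = 1). unfold z. rewrite sumL_map_seq. simpl. auto. }
      destruct (Hyp z Hz) as [w Hw]. exists w. unfold z in Hw. rewrite sumL_map_seq in Hw. simpl in Hw.
      erewrite sumN_ext; [exact Hw|]. intros i _. unfold l. ring.
    + exists (map ws (seq 0 K)). split.
      { destruct K; [lia|]. simpl. discriminate. }
      intros Q h1 h2. specialize (HB Q h1 h2). destruct (In_nth B Q d HB) as [i [Hi <-]].
      rewrite sumL_map_seq, length_map, length_seq. apply Hws. fold n in Hi. lia.
Qed.

Theorem theorem2
  (S : event -> Prop) (HS : is_sigma_algebra S) (Hcyl : contains_cylinders S)
  (eps : R) (Heps : 0 <= eps < 1)
  (T : setfun -> event)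
  (HTopen : forall P, opinion S P -> is_open (T P))
  (HTI : forall P, opinion S P -> P (T P) <= eps) :
  forall delta : R, 0 < delta <= 1 - eps ->
    exists z : list (setfun * R), strategy S z /\
      forall w : Omega,
        mass z (fun P => opinion S P /\ ~ T P w) >= 1 - eps - delta.
Proof.
  intros delta Hd. apply NNPP. intros Hneg.
  set (c := eps + delta). set (c2 := eps + delta / 2). set (eta := delta / 4).
  assert (Hyp : forall z, strategy S z -> exists w, sumL (fun Pw => indP (T (fst Pw) w) * snd Pw) z > c).
  { intros z Hz. apply NNPP. intros Hn. apply Hneg. exists z. split; auto. intros w.
    apply Rnot_lt_ge. intros Hlt. apply Hn. exists w.
    rewrite mass_eq in Hlt. destruct Hz as [Hz1 Hz2].
    assert (E1 : sumL (fun Pw => indP (opinion S (fst Pw) /\ ~ T (fst Pw) w) * snd Pw) z =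
                 sumL snd z - sumL (fun Pw => indP (T (fst Pw) w) * snd Pw) z).
    { unfold Rminus. rewrite <- (Rmult_1_l (sumL (fun Pw => indP (T (fst Pw) w) * snd Pw) z)).
      rewrite Ropp_mult_distr_l, <- sumL_scal, <- sumL_plus. apply sumL_ext. intros Pw HPw.
      destruct (Hz1 Pw HPw) as [Hop _].
      destruct (classic (T (fst Pw) w)).
      - rewrite indP_F by tauto. rewrite indP_T by auto. ring.
      - rewrite indP_T by tauto. rewrite indP_F by auto. ring. }
    change (sumL snd z = 1) in Hz2. rewrite E1, Hz2 in Hlt. unfold c. lra. }
  assert (Heta : 0 < eta) by (unfold eta; lra).
  assert (Hc2 : 0 < c2) by (unfold c2; lra).
  assert (Hc : c2 * (1 + eta) < c) by (unfold c, c2, eta; nra).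
  assert (Hms : forall A, exists ms : list Omega, ms <> nil /\
    forall Q, In Q A -> opinion S Q -> sumL (fun w => indP (T Q w)) ms >= c2 * INR (length ms)).
  { intros A. apply (ms_exists S T c c2 eta A); auto. }
  set (msf := fun A => proj1_sig (constructive_indefinite_description _ (Hms A))).
  assert (msfP : forall A, msf A <> nil /\
    forall Q, In Q A -> opinion S Q -> sumL (fun w => indP (T Q w)) (msf A) >= c2 * INR (length (msf A))).
  { intros A. exact (proj2_sig (constructive_indefinite_description _ (Hms A))). }
  clearbody msf.
  destruct (ultra_exists nat (fun A => exists N, forall n, (N <= n)%nat -> A n)) as [V [HV HVc]].
  { exists O; auto. }
  { intros [N h]. apply (h N); auto. }
  { intros A B [N1 h1] [N2 h2]. exists (Nat.max N1 N2). intros n Hn. split; [apply h1|apply h2]; lia. }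
  { intros A B HAB [N h]. exists N; auto. }
  assert (HCV : cofin V) by (intros N; apply HVc; exists N; auto).
  destruct (ultra_exists (list setfun) (fun B => exists L0, forall A, incl L0 A -> B A)) as [U [HU HUc]].
  { exists nil; auto. }
  { intros [L0 h]. apply (h L0). apply incl_refl. }
  { intros A B [L1 h1] [L2 h2]. exists (L1 ++ L2). intros A0 Hi. split.
    - apply h1. intros a Ha. apply Hi. apply in_app_iff; auto.
    - apply h2. intros a Ha. apply Hi. apply in_app_iff; auto. }
  { intros A B HAB [L0 h]. exists L0; auto. }
  set (P := Pstar V U msf).
  assert (HP : opinion S P) by (apply Pstar_opinion; auto; intros A; apply msfP).
  pose proof (HTI P HP) as H1.
  assert (H2 : c2 <= P (T P)).
  { eapply islim_ge; [exact HU| |apply Pstar_spec; auto; intros A; apply msfP].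
    apply (proj1 (proj2 (proj2 (proj2 HU)))) with (A := fun A => In P A).
    - intros A HA. destruct (msfP A) as [Hne Hge]. specialize (Hge P HA HP). unfold avg.
      assert (Hl : 0 < INR (length (msf A))).
      { destruct (msf A); [congruence|]. simpl length. rewrite S_INR. pose proof (pos_INR (length l)). lra. }
      apply (Rmult_le_reg_r (INR (length (msf A)))); auto. unfold Rdiv. rewrite Rmult_assoc, Rinv_l by lra.
      rewrite Rmult_1_r. apply Rge_le in Hge. eapply Rle_trans; [|apply sumL_le; intros w _; apply lam_ge_ind; auto].
      lra.
    - apply HUc. exists (P :: nil). intros A HA. apply HA. left; auto. }
  unfold c2 in H2. lra.
Qed.
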